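(* Let $\mathbf x,\mathbf y$ be two different instances. If $P(\mathbf y\in I(\mathbf x))<1$, then $P(I(\mathbf x)\cap I(\mathbf y)=\emptyset)=1$, meaning: for every instance $\mathbf w$, $P(\mathbf w\in I(\mathbf x)\cap I(\mathbf y))=0$. Moreover, $$P(\mathbf y\in I(\mathbf x))=1\iff P(I(\mathbf x)=I(\mathbf y))=1,$$ where $P(I(\mathbf x)=I(\mathbf y))=1$ means: for every instance $\mathbf w$, $P(\mathbf w\in I(\mathbf x))=1$ if and only if $P(\mathbf w\in I(\mathbf y))=1$.
   Context: Setting: $n$ instances with covariates in $\mathbb R^d$ form the dataset $\mathcal D=\mathcal D_n$; a forest of $K$ axis-aligned causal trees is built on $\mathcal D$, the trees being independent given $\mathcal D$. $L_k(\mathbf u)$ is the leaf of tree $k$ containing $\mathbf u$ (each point lies in exactly one leaf of each tree). For instances $\mathbf u,\mathbf v$, $P(\mathbf u\in L(\mathbf v))$ denotes $P(\mathbf u\in L_k(\mathbf v)\mid\mathcal D)$ (same for all $k$), the events $\{\mathbf u\in L_k(\mathbf v)\}$, $k=1,\dots,K$, are independent given $\mathcal D$, and $\lim_{n\to\infty}P(\mathbf u\in L(\mathbf v))$ is assumed to exist for all pairs. LILI with $K$ trees: $\mathbf u\in I(\mathbf v,\Theta_K)$ iff the number of $k\le K$ with $\mathbf u\in L_k(\mathbf v)$ exceeds $K-\sqrt K$. All probabilities of events involving $I(\cdot)$ are conditional on $\mathcal D$ and defined as $\lim_{K\to\infty}\lim_{n\to\infty}$ of the corresponding probabilities with $I(\cdot,\Theta_K)$,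 e.g. $P(\mathbf u\in I(\mathbf v)):=\lim_{K}\lim_{n}P(\mathbf u\in I(\mathbf v,\Theta_K)\mid\mathcal D_n)$ and $P(\mathbf w\in I(\mathbf x)\cap I(\mathbf y)):=\lim_K\lim_nP(\mathbf w\in I(\mathbf x,\Theta_K)\cap I(\mathbf y,\Theta_K)\mid\mathcal D_n)$. *)

(* Defs.v *)
From HB Require Import structures.
From mathcomp Require Import all_boot all_order all_algebra.
From mathcomp Require Import all_classical all_reals all_analysis.
Set Implicit Arguments. Unset Strict Implicit. Unset Printing Implicit Defensive.
Import Order.TTheory GRing.Theory Num.Theory.
Import numFieldNormedType.Exports.
Local Open Scope classical_set_scope.
Local Open Scope ring_scope.

(* Setting.
   - instances are points of 'rV[R]_dim;
   - for each sample size n, [P n] is the (conditional on D_n) probability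
     governing the randomness of the forest;
   - [leaf n k w u] is the label of the leaf of tree k (built on D_n) that
     contains instance u, in outcome w; so every point lies in exactly one leaf
     of each tree, and  u \in L_k(v)  iff  leaf n k w u = leaf n k w v. *)

Section Defs.
Context {R : realType} {dim : nat} {d : measure_display} {Omega : measurableType d}
        {Lf : eqType}.
Variable leaf : nat -> nat -> Omega -> 'rV[R]_dim -> Lf.

Definition inLeaf (n k : nat) (u v : 'rV[R]_dim) : set Omega :=
  [set w | leaf n k w u = leaf n k w v].

Definition leafCount (n K : nat) (u v : 'rV[R]_dim) (w : Omega) : nat :=
  #|[set k : 'I_K | leaf n k w u == leaf n k w v]|.

(* the LILI event  u \in I(v, Theta_K)  : count exceeds K - sqrt K *)
Definition inLILI (n K : nat) (u v : 'rV[R]_dim) : set Omega :=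
  [set w | (K%:R - Num.sqrt (K%:R)) < (leafCount n K u v w)%:R :> R].
End Defs.

Definition mutually_independent {R : realType} {d : measure_display}
  {Omega : measurableType d} (P : probability Omega R) (E : nat -> set Omega) :=
  forall s : seq nat, uniq s ->
    fine (P (\big[setI/setT]_(k <- s) E k)) = \prod_(k <- s) fine (P (E k)).

Definition Plim {R : realType} {d : measure_display} {Omega : measurableType d}
  (P : nat -> probability Omega R) (E : nat -> nat -> set Omega) : R :=
  limn (fun K : nat => limn (fun n : nat => fine (P n (E n K)))).

(* Main.v *)
Require Import Defs.
From HB Require Import structures.
From mathcomp Require Import all_boot all_order all_algebra.
From mathcomp Require Import all_classical all_reals all_analysis.
From mathcomp Require Import zify ring lra.
Import Order.TTheory GRing.Theory Num.Theory.
Import numFieldNormedType.Exports.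
Local Open Scope classical_set_scope.
Local Open Scope ring_scope.
Lemma fineP {d} {T : measurableType d} {R : realType} (P : probability T R) A :
  measurable A -> P A = (fine (P A))%:E.
Proof.
move=> mA; rewrite fineK // ge0_fin_numE //.
by rewrite (le_lt_trans (probability_le1 P mA)) // ltry.
Qed.

Lemma fine01 {d} {T : measurableType d} {R : realType} (P : probability T R) A :
  measurable A -> 0 <= fine (P A) <= 1.
Proof.
move=> mA; have h1 := probability_le1 P mA.
have h0 : (0 <= P A)%E by apply: measure_ge0.
move: h0 h1; rewrite (fineP P A mA) !lee_fin => -> /=; by [].
Qed.

Lemma fine_leP {d} {T : measurableType d} {R : realType} (P : probability T R) A B :
  measurable A -> measurable B -> A `<=` B -> fine (P A) <= fine (P B).
Proof.
move=> mA mB AB; rewrite -lee_fin -!fineP //.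
by apply: le_measure => //; rewrite inE.
Qed.

Lemma inLeafC (R : realType) dim d (Omega : measurableType d) (Lf : eqType)
  (leaf : nat -> nat -> Omega -> 'rV[R]_dim -> Lf) n k u v :
  inLeaf leaf n k u v = inLeaf leaf n k v u.
Proof. by rewrite /inLeaf; apply/seteqP; split => w /= ->. Qed.

Lemma leafCountE (R : realType) dim d (Omega : measurableType d) (Lf : eqType)
  (leaf : nat -> nat -> Omega -> 'rV[R]_dim -> Lf) n K u v w :
  (leafCount leaf n K u v w)%:R =
    \sum_(k < K) (\1_(inLeaf leaf n k u v) w : R).
Proof.
rewrite /leafCount -sum1_card natr_sum big_mkcond /=.
apply: eq_bigr => k _.
case: ifPn => h; move: h; rewrite ?in_setE ?notin_setE /= => h.
  by rewrite indicE mem_set //; apply/eqP.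
by rewrite indicE memNset //= => /eqP.
Qed.

Lemma measurable_inLILI {R : realType} {dim d} {Omega : measurableType d} {Lf : eqType}
  (leaf : nat -> nat -> Omega -> 'rV[R]_dim -> Lf)
  (Hmeas : forall n k u v, measurable (inLeaf leaf n k u v)) n K u v :
  measurable (inLILI leaf n K u v).
Proof.
pose f := fun w => \sum_(k < K) (\1_(inLeaf leaf n k u v) w : R).
have mf : measurable_fun setT f.
  by apply: measurable_sum => k; apply: measurable_realfun.measurable_indic.
rewrite (_ : inLILI leaf n K u v =
   [set: Omega] `&` f @^-1` `](K%:R - Num.sqrt K%:R), +oo[%classic).
  exact: (mf measurableT _ (measurable_itv _)).
apply/seteqP; split => w /=.
  by rewrite /f -leafCountE in_itv /= andbT.
by rewrite /f -leafCountE in_itv /= andbT => -[].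
Qed.

Definition msq (R : realType) (K : nat) : nat := Num.trunc (Num.sqrt (K%:R : R)).

Lemma msq_sq (R : realType) K : (msq R K * msq R K <= K)%N.
Proof.
rewrite -(ler_nat R) natrM.
have h0 : 0 <= Num.sqrt (K%:R : R) by [].
have h := truncn_le (Num.sqrt (K%:R : R)); rewrite h0 in h.
rewrite -[X in _ <= X](@sqr_sqrtr R K%:R) //.
by rewrite expr2; apply: ler_pM => //.
Qed.

Lemma msq_gt (R : realType) K : Num.sqrt (K%:R : R) < (msq R K).+1%:R.
Proof. exact: truncnS_gt. Qed.

Lemma prod_const_seq (R : realType) (s : seq nat) (x : R) :
  \prod_(k <- s) x = x ^+ size s.
Proof. elim: s => [|a s IH]; by rewrite ?big_nil ?big_cons ?IH ?exprS. Qed.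

Lemma prod_inter {R : realType} {dim d} {Omega : measurableType d} {Lf : eqType}
  (Q : probability Omega R)
  (leaf : nat -> nat -> Omega -> 'rV[R]_dim -> Lf) n u v
  (Hsame : forall k, Q (inLeaf leaf n k u v) = Q (inLeaf leaf n 0 u v))
  (Hindep : mutually_independent Q (fun k => inLeaf leaf n k u v))
  (s : seq nat) : uniq s ->
  fine (Q (\big[setI/setT]_(k <- s) inLeaf leaf n k u v)) =
    fine (Q (inLeaf leaf n 0 u v)) ^+ size s.
Proof.
move=> us; rewrite Hindep //.
under eq_bigr do rewrite Hsame.
exact: prod_const_seq.
Qed.

Lemma LILI_sub (R : realType) dim d (Omega : measurableType d) (Lf : eqType)
  (leaf : nat -> nat -> Omega -> 'rV[R]_dim -> Lf) n K u v w :
  inLILI leaf n K u v w ->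
  exists2 i, (i < (msq R K).+1)%N &
    forall j, (j < (msq R K).-1)%N -> inLeaf leaf n (i * (msq R K).-1 + j) u v w.
Proof.
set m := msq R K; set s := m.-1 => hw.
apply: contrapT => hn.
have hmK : (m * m <= K)%N by apply: msq_sq.
have hf : forall i : 'I_m.+1, exists k : {k : 'I_K | ~~ (leaf n k w u == leaf n k w v)},
    (val k %/ s = i)%N.
  move=> i.
  have : ~ (forall j, (j < s)%N -> inLeaf leaf n (i * s + j) u v w).
    by move=> h; apply: hn; exists i.
  move=> /existsNP [j /not_implyP [js nE]].
  have kK : (i * s + j < K)%N by have := ltn_ord i; nia.
  have nE' : ~~ (leaf n (Ordinal kK) w u == leaf n (Ordinal kK) w v).
    by apply/eqP.
  exists (exist _ (Ordinal kK) nE') => /=.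
  by rewrite divnMDl ?divn_small ?addn0 //; apply: leq_ltn_trans js.
have [f hfP] := choice hf.
have finj : injective f.
  by move=> i1 i2 e; apply/val_inj; rewrite /= -(hfP i1) -(hfP i2) e.
have := leq_card f finj; rewrite card_ord card_sig => hc.
have hC := cardC [pred k : 'I_K | leaf n k w u == leaf n k w v].
rewrite card_ord in hC.
have hL : leafCount leaf n K u v w = #|[pred k : 'I_K | leaf n k w u == leaf n k w v]|.
  by apply: eq_card => k; rewrite !inE; apply/idP/idP; rewrite in_setE.
have hc' : (#|[pred x : 'I_K | ~~ (leaf n x w u == leaf n x w v)]| =
            #|[predC [pred k : 'I_K | leaf n k w u == leaf n k w v]]|)%N.
  by apply: eq_card => k; rewrite !inE.
rewrite hc' in hc.
have hle : (leafCount leaf n K u v w + m.+1 <= K)%N.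
  rewrite hL -[X in (_ <= X)%N]hC; exact: leq_add.
move: hw; rewrite /inLILI /= => hw.
have := msq_gt R K; rewrite -/m => hs.
move: hle; rewrite -(ler_nat R) natrD => hle.
move: hw hs hle; clear.
set a := (leafCount _ _ _ _ _ _)%:R; set b := Num.sqrt _; set c := _.+1%:R; set e := K%:R.
move=> *; lra.
Qed.

Lemma bigI_mem {T : Type} (r : seq nat) (F : nat -> set T) w :
  (forall k, k \in r -> F k w) -> (\big[setI/setT]_(k <- r) F k) w.
Proof.
elim: r => [|a r IH] h; first by rewrite big_nil.
rewrite big_cons; split; first by apply: h; rewrite inE eqxx.
by apply: IH => k kr; apply: h; rewrite inE kr orbT.
Qed.

Lemma bigU_mem {T : Type} (r : seq nat) (F : nat -> set T) w k :
  k \in r -> F k w -> (\big[setU/set0]_(k <- r) F k) w.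
Proof.
elim: r => [|a r IH] //; rewrite inE big_cons => /orP [/eqP <- h|kr h].
  by left.
by right; apply: IH.
Qed.

Lemma LILI_bound (R : realType) dim d (Omega : measurableType d) (Lf : eqType)
  (Q : probability Omega R)
  (leaf : nat -> nat -> Omega -> 'rV[R]_dim -> Lf) n K u v
  (Hmeas : forall k, measurable (inLeaf leaf n k u v))
  (Hsame : forall k, Q (inLeaf leaf n k u v) = Q (inLeaf leaf n 0 u v))
  (Hindep : mutually_independent Q (fun k => inLeaf leaf n k u v)) :
  measurable (inLILI leaf n K u v) ->
  fine (Q (inLILI leaf n K u v)) <=
    (msq R K).+1%:R * fine (Q (inLeaf leaf n 0 u v)) ^+ (msq R K).-1.
Proof.
move=> mL.
set m := msq R K; set s := m.-1; set q := fine (Q (inLeaf leaf n 0 u v)).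
pose B := fun i : nat => \big[setI/setT]_(k <- [seq i * s + j | j <- iota 0 s])
   inLeaf leaf n k u v.
have mB : forall i, measurable (B i).
  by move=> i; apply: bigsetI_measurable => k _; apply: Hmeas.
have mU : measurable (\big[setU/set0]_(i < m.+1) B i).
  by apply: bigsetU_measurable => i _.
have sub : inLILI leaf n K u v `<=` \big[setU/set0]_(i < m.+1) B i.
  move=> w /LILI_sub [i im hj].
  rewrite -(big_mkord xpredT B); apply: (@bigU_mem _ _ _ _ i); first by rewrite mem_index_iota.
  apply: bigI_mem => k /mapP [j]; rewrite mem_iota add0n => js ->.
  exact: hj.
have QB : forall i, Q (B i) = (q ^+ s)%:E.
  move=> i; rewrite (fineP Q (B i) (mB i)) /B prod_inter //.
    by rewrite size_map size_iota.
  rewrite map_inj_uniq ?iota_uniq //; exact: addnI.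
rewrite -lee_fin -fineP //.
apply: le_trans (le_measure _ _ _ sub) _; rewrite ?inE //.
apply: le_trans (Boole_inequality _ _) _; first by move=> i _.
rewrite (eq_bigr (fun _ => (q ^+ s)%:E)); last by move=> i _; exact: QB.
by rewrite sumEFin sumr_const card_ord mulr_natl.
Qed.

Lemma msq_ge (R : realType) M K : (M * M <= K)%N -> (M <= msq R K)%N.
Proof.
move=> h; rewrite /msq truncn_ge_nat //.
rewrite -[M%:R](@ger0_norm R) // -sqrtr_sqr ler_sqrt // -natrX ler_nat.
by rewrite expnS expn1.
Qed.

Lemma geo_bound (R : realType) (r c x eps : R) (k : nat) :
  0 < r -> c = - ln r -> x = k%:R -> 0 < c -> 2 <= x -> 0 < eps ->
  4 < x * c ^+ 2 * eps -> (x + 2) * r ^+ k < eps.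
Proof.
move=> r0 hc hx c0 x2 e0 hxe.
set y := r ^+ k.
have y0 : 0 < y by rewrite exprn_gt0.
have hE : y * expR (x * c) = 1.
  rewrite /y -[r](@lnK R r) ?posrE // -expRM_natl -hx hc mulrN.
  exact: expRxMexpNx_1.
have hxc : 0 <= x * c by apply: mulr_ge0 => //; lra.
have := expR_ge1Dxn 1 hxc.
have -> : (2`!)%:R = 2 :> R by [].
move=> hge.
have h1 : y * ((x * c) ^+ 2 / 2) <= 1.
  rewrite -[X in _ <= X]hE ler_pM2l //; lra.
have h2 : y * (x * x * (c * c)) <= 2.
  move: h1; rewrite expr2. move=> h1. lra.
have h3 : (x + 2) * y <= 2 * x * y by nra.
have h4 : 2 * x * y * (x * (c * c) * eps) <= 4 * eps.
  have -> : 2 * x * y * (x * (c * c) * eps) = (2 * eps) * (y * (x * x * (c * c))) by ring.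
  have : (2 * eps) * (y * (x * x * (c * c))) <= (2 * eps) * 2.
    by rewrite ler_pM2l //; lra.
  lra.
move: hxe; rewrite expr2 => hxe.
have h5 : 2 * x * y * 4 < 2 * x * y * (x * (c * c) * eps).
  rewrite ltr_pM2l; first exact: hxe.
  apply: mulr_gt0 => //; lra.
lra.
Qed.

Lemma bK_cvg (R : realType) (p : R) : 0 <= p -> p < 1 ->
  (fun K => (msq R K).+1%:R * p ^+ (msq R K).-1) @ \oo --> (0:R).
Proof.
move=> p0 p1.
set r := (1 + p) / 2.
have r0 : 0 < r by rewrite /r; lra.
have r1 : r < 1 by rewrite /r; lra.
have pr : p <= r by rewrite /r; lra.
set c := - ln r.
have c0 : 0 < c by rewrite /c oppr_gt0 ln_lt0 // r0 r1.
apply/cvgrPdist_lt => eps e0.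
set M := (Num.trunc (4 / (c ^+ 2 * eps))).+3.
exists (M * M)%N => // K /= hK.
have hm := msq_ge R M K hK.
have ht := truncnS_gt (4 / (c ^+ 2 * eps)).
move: hm ht; rewrite /M.
case E: (msq R K) => [|k] //= hm ht.
rewrite sub0r normrN ger0_norm; last by apply: mulr_ge0 => //; apply: exprn_ge0.
have hk2 : (2 <= k)%N by move: hm; rewrite !ltnS; apply: leq_trans.
have hk : ((Num.trunc (4 / (c ^+ 2 * eps))).+1 <= k)%N.
  by move: hm; rewrite !ltnS; apply: leq_trans.
have hkR : 4 / (c ^+ 2 * eps) < k%:R.
  by apply: lt_le_trans ht _; rewrite ler_nat.
have hxe : 4 < k%:R * c ^+ 2 * eps.
  move: hkR; rewrite ltr_pdivrMr; first by rewrite mulrA.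
  by apply: mulr_gt0 => //; apply: exprn_gt0.
have k2 : (2 : R) <= k%:R by rewrite (ler_nat R 2 k).
apply: (le_lt_trans _ (@geo_bound R r c k%:R eps k r0 erefl erefl c0 k2 e0 hxe)).
have -> : (k.+2%:R : R) = k%:R + 2 by rewrite -addn2 natrD.
apply: ler_pM => //.
- by apply: exprn_ge0.
- by apply: lerXn2r => //; rewrite nnegrE //; apply: ltW.
Qed.

Lemma cvg_expn (R : realType) (f : nat -> R) (l : R) k :
  f @ \oo --> l -> (fun n => f n ^+ k) @ \oo --> l ^+ k.
Proof.
move=> hf; elim: k => [|k IH].
  under eq_fun do rewrite expr0. by rewrite expr0; apply: cvg_cst.
under eq_fun do rewrite exprS. rewrite exprS.
exact: cvgM.
Qed.

Lemma inner_bound (R : realType) (a b : nat -> R) (B : R) :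
  (forall n, 0 <= a n <= b n) -> b @ \oo --> B -> 0 <= limn a <= B.
Proof.
move=> hab hb.
have B0 : 0 <= B.
  rewrite -(cvg_lim _ hb) //; apply: limr_ge; first exact: cvgP hb.
  by apply: nearW => n; have /andP[h1 h2] := hab n; apply: le_trans h2.
case: (pselect (cvgn a)) => ca; last by rewrite dvgP // lexx.
apply/andP; split.
  by apply: limr_ge => //; apply: nearW => n; have /andP[] := hab n.
rewrite -(cvg_lim _ hb) //; apply: ler_lim => //; first exact: cvgP hb.
by apply: nearW => n; have /andP[] := hab n.
Qed.

Lemma bigI_memE {T : Type} (r : seq nat) (F : nat -> set T) w k :
  (\big[setI/setT]_(k <- r) F k) w -> k \in r -> F k w.
Proof.
elim: r => [|a r IH] //; rewrite big_cons => -[ha hr]; rewrite inE => /orP [/eqP ->//|kr].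
exact: IH.
Qed.

Lemma LemB (R : realType) dim d (Omega : measurableType d) (Lf : eqType)
  (P : nat -> probability Omega R)
  (leaf : nat -> nat -> Omega -> 'rV[R]_dim -> Lf)
  (Hmeas : forall n k u v, measurable (inLeaf leaf n k u v))
  (Hsame : forall n k u v,
      P n (inLeaf leaf n k u v) = P n (inLeaf leaf n 0 u v))
  (Hindep : forall n u v,
      mutually_independent (P n) (fun k => inLeaf leaf n k u v))
  u v (p : R) (E : nat -> nat -> set Omega) :
  (fun n => fine (P n (inLeaf leaf n 0 u v))) @ \oo --> p -> p < 1 ->
  (forall n K, measurable (E n K)) ->
  (forall n K, E n K `<=` inLILI leaf n K u v) ->
  Plim P E = 0.
Proof.
move=> hq p1 mE sE.
have p0 : 0 <= p.
  rewrite -(cvg_lim _ hq) //; apply: limr_ge; first exact: cvgP hq.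
  by apply: nearW => n; have /andP[] := fine01 (P n) _ (Hmeas n 0 u v).
pose c K := limn (fun n => fine (P n (E n K))).
have hc : forall K, 0 <= c K <= (msq R K).+1%:R * p ^+ (msq R K).-1.
  move=> K; apply: (@inner_bound R _
    (fun n => (msq R K).+1%:R * fine (P n (inLeaf leaf n 0 u v)) ^+ (msq R K).-1)).
    move=> n; have /andP[h0 _] := fine01 (P n) _ (mE n K).
    rewrite h0 /=; apply: le_trans (fine_leP (P n) _ _ (mE n K) (measurable_inLILI _ Hmeas n K u v) (sE n K)) _.
    apply: LILI_bound => //; try (by move=> k; apply: Hmeas);
      try (by move=> k; apply: Hsame).
    exact: measurable_inLILI _ Hmeas n K u v.
  apply: cvgM; first exact: cvg_cst.
  exact: cvg_expn.
rewrite /Plim -/c; apply: cvg_lim => //.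
apply: (squeeze_cvgr (f := fun _ => 0)
   (h := fun K => (msq R K).+1%:R * p ^+ (msq R K).-1)).
- by apply: nearW => K; exact: hc.
- exact: cvg_cst.
- exact: bK_cvg.
Qed.

Lemma LemA (R : realType) dim d (Omega : measurableType d) (Lf : eqType)
  (P : nat -> probability Omega R)
  (leaf : nat -> nat -> Omega -> 'rV[R]_dim -> Lf)
  (Hmeas : forall n k u v, measurable (inLeaf leaf n k u v))
  (Hsame : forall n k u v,
      P n (inLeaf leaf n k u v) = P n (inLeaf leaf n 0 u v))
  (Hindep : forall n u v,
      mutually_independent (P n) (fun k => inLeaf leaf n k u v))
  u v :
  (fun n => fine (P n (inLeaf leaf n 0 u v))) @ \oo --> (1:R) ->
  Plim P (fun n K => inLILI leaf n K u v) = 1.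
Proof.
move=> hq; apply: lim_near_cst => //.
exists 1%N => // K /= K1.
apply: cvg_lim => //.
apply: (squeeze_cvgr (f := fun n => fine (P n (inLeaf leaf n 0 u v)) ^+ K)
   (h := fun _ => 1)); last 2 first.
- by rewrite -(expr1n R K); apply: cvg_expn.
- exact: cvg_cst.
apply: nearW => n.
have /andP[_ ->] := fine01 (P n) _ (measurable_inLILI _ Hmeas n K u v).
rewrite andbT.
rewrite -[X in _ ^+ X](size_iota 0 K) -(@prod_inter _ _ _ _ _ (P n) leaf n u v (fun k => Hsame n k u v) (Hindep n u v)) ?iota_uniq //.
apply: fine_leP.
- by apply: bigsetI_measurable => k _; apply: Hmeas.
- exact: measurable_inLILI.
move=> w hw; rewrite /inLILI /= leafCountE.
rewrite (eq_bigr (fun _ => 1)); last first.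
  move=> k _; rewrite indicE mem_set //.
  have := @bigI_memE _ _ _ w (nat_of_ord k) hw; apply.
  by rewrite mem_iota add0n ltn_ord.
rewrite sumr_const card_ord.
have : 0 < Num.sqrt (K%:R : R) by rewrite sqrtr_gt0 ltr0n.
rewrite [(1 *+ K)]mulr1n; lra.
Qed.

Lemma fineI_ge {d} {T : measurableType d} {R : realType} (P : probability T R) A B :
  measurable A -> measurable B ->
  fine (P A) + fine (P B) - 1 <= fine (P (A `&` B)).
Proof.
move=> mA mB.
have mAB : measurable (A `\` B) by apply: measurableD.
have mI : measurable (A `&` B) by apply: measurableI.
have h1 : P A = (P (A `\` B) + P (A `&` B))%E by apply: measureDI.
rewrite (fineP P A mA) (fineP P _ mAB) (fineP P _ mI) -EFinD in h1.
have {}h1 := EFin_inj h1.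
have h2 : fine (P (A `\` B)) <= fine (P (~` B)).
  by apply: (fine_leP _ _ _ mAB (measurableC mB)) => w [].
have h3 : fine (P (~` B)) = 1 - fine (P B).
  by rewrite probability_setC // (fineP P B mB).
lra.
Qed.

Lemma trans_lim (R : realType) dim d (Omega : measurableType d) (Lf : eqType)
  (P : nat -> probability Omega R)
  (leaf : nat -> nat -> Omega -> 'rV[R]_dim -> Lf)
  (Hmeas : forall n k u v, measurable (inLeaf leaf n k u v)) a b c :
  (fun n => fine (P n (inLeaf leaf n 0 a b))) @ \oo --> (1:R) ->
  (fun n => fine (P n (inLeaf leaf n 0 b c))) @ \oo --> (1:R) ->
  (fun n => fine (P n (inLeaf leaf n 0 a c))) @ \oo --> (1:R).
Proof.
move=> h1 h2.
apply: (squeeze_cvgr (f := fun n => fine (P n (inLeaf leaf n 0 a b)) +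
   fine (P n (inLeaf leaf n 0 b c)) - 1) (h := fun _ => 1)); last 2 first.
- have hc := cvgB (cvgD h1 h2) (cvg_cst (1:R)).
  have e : (1:R) + 1 - 1 = 1 by ring.
  rewrite e in hc; exact: hc.
- exact: cvg_cst.
apply: nearW => n; apply/andP; split; last first.
  by have /andP[] := fine01 (P n) _ (Hmeas n 0 a c).
apply: le_trans (fineI_ge _ _ _ (Hmeas n 0 a b) (Hmeas n 0 b c)) _.
apply: fine_leP => //; first by apply: measurableI.
by move=> w [h h']; rewrite /inLeaf /= in h h' *; rewrite h h'.
Qed.

Theorem mainTheorem7 (R : realType) (dim : nat) (d : measure_display)
  (Omega : measurableType d) (Lf : eqType)
  (P : nat -> probability Omega R)
  (leaf : nat -> nat -> Omega -> 'rV[R]_dim -> Lf)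
  (* the events u \in L_k(v) are measurable *)
  (Hmeas : forall n k u v, measurable (inLeaf leaf n k u v))
  (* P(u \in L_k(v) | D_n) does not depend on k *)
  (Hsame : forall n k u v,
      P n (inLeaf leaf n k u v) = P n (inLeaf leaf n 0 u v))
  (* the events {u \in L_k(v)}, k = 1,2,..., are independent given D_n *)
  (Hindep : forall n u v,
      mutually_independent (P n) (fun k => inLeaf leaf n k u v))
  (* lim_n P(u \in L(v)) exists for all pairs *)
  (Hlim : forall u v,
      cvg ((fun n => fine (P n (inLeaf leaf n 0 u v))) @ \oo))
  (x y : 'rV[R]_dim) (Hxy : x != y) :
  (Plim P (fun n K => inLILI leaf n K y x) < 1 ->
     forall w : 'rV[R]_dim,
       Plim P (fun n K => inLILI leaf n K w x `&` inLILI leaf n K w y) = 0)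
  /\
  (Plim P (fun n K => inLILI leaf n K y x) = 1 <->
     forall w : 'rV[R]_dim,
       (Plim P (fun n K => inLILI leaf n K w x) = 1 <->
        Plim P (fun n K => inLILI leaf n K w y) = 1)).
Proof.
pose q u v := fun n => fine (P n (inLeaf leaf n 0 u v)).
pose pl u v := limn (q u v).
have hq : forall u v, q u v @ \oo --> pl u v by move=> u v; exact: Hlim.
have pl1 : forall u v, pl u v <= 1.
  move=> u v; apply: limr_le; first exact: Hlim.
  by apply: nearW => n; have /andP[] := fine01 (P n) _ (Hmeas n 0 u v).
have dich : forall u v, pl u v < 1 \/ q u v @ \oo --> (1:R).
  move=> u v; have := pl1 u v; rewrite le_eqVlt => /orP [/eqP e|]; last by left.
  by right; rewrite -e; exact: hq.
have sym : forall u v, q u v @ \oo --> (1:R) -> q v u @ \oo --> (1:R).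
  by move=> u v; rewrite /q; under eq_fun do rewrite inLeafC.
have tr : forall a b c, q a b @ \oo --> (1:R) -> q b c @ \oo --> (1:R) ->
    q a c @ \oo --> (1:R).
  by move=> a b c; apply: trans_lim.
have key : forall u v, Plim P (fun n K => inLILI leaf n K u v) = 1 <->
    q u v @ \oo --> (1:R).
  move=> u v; split; last exact: LemA.
  move=> h; case: (dich u v) => // hlt.
  have h0 := @LemB _ _ _ _ _ P leaf Hmeas Hsame Hindep u v _ _ (hq u v) hlt
    (fun n K => measurable_inLILI _ Hmeas n K u v) (fun n K => @subset_refl _ _).
  by move: h; rewrite h0 => /eqP; rewrite eq_sym oner_eq0.
have refl : forall u, q u u @ \oo --> (1:R).
  move=> u; rewrite /q.
  have e : forall n, inLeaf leaf n 0 u u = setT by move=> n; apply/seteqP; split.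
  under eq_fun do rewrite e probability_setT.
  exact: cvg_cst.
split.
  move=> hlt w.
  have nyx : ~ (q y x @ \oo --> (1:R)).
    by move=> /key h; move: hlt; rewrite h ltxx.
  have mI : forall n K, measurable (inLILI leaf n K w x `&` inLILI leaf n K w y).
    by move=> n K; apply: measurableI; apply: measurable_inLILI.
  case: (dich w x) => [hx|hx].
    exact: (@LemB _ _ _ _ _ P leaf Hmeas Hsame Hindep w x _ _ (hq w x) hx mI (fun n K => @subIsetl _ _ _)).
  case: (dich w y) => [hy|hy].
    exact: (@LemB _ _ _ _ _ P leaf Hmeas Hsame Hindep w y _ _ (hq w y) hy mI (fun n K => @subIsetr _ _ _)).
  by exfalso; apply: nyx; apply: (tr _ w) => //; apply: sym.
split.
  move=> /key hyx w; split => /key h; apply/key.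
    by apply: (tr _ x) => //; apply: sym.
  exact: (tr _ y).
move=> h.
have := (h x).1 ((key x x).2 (refl x)).
move=> /key hxy; apply/key; exact: sym.
Qed.
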